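(* Let $q$ be a power of an odd prime with $q\equiv3\pmod4$, $d=4k+2$ with $k$ a positive integer, and $A\subset\mathbb F_q^d$. Let $N(A)$ be the number of pairs $(a,b)\in A^2$ with $\|a-b\|=0$. Then \[N(A)\ll\frac{|A|^2}{q}+q^{\frac{d-2}{2}}|A|.\]
   Context: $\|x\|=x_1^2+\cdots+x_d^2$. $X\ll Y$ means $X\le CY$ with $C$ absolute (independent of $q$ and $A$). *)

(* Defs.v *)
From HB Require Import structures.
From mathcomp Require Import all_boot all_order all_algebra all_field.
Set Implicit Arguments. Unset Strict Implicit. Unset Printing Implicit Defensive.
Import Order.TTheory GRing.Theory Num.Theory.
Local Open Scope ring_scope.

Definition sqnorm (F : finFieldType) (d : nat) (x : 'rV[F]_d) : F :=
  \sum_(i < d) x 0 i ^+ 2.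

Definition Niso (F : finFieldType) (d : nat) (A : {set 'rV[F]_d}) : nat :=
  #|[set p : 'rV[F]_d * 'rV[F]_d |
      [&& p.1 \in A, p.2 \in A & sqnorm (p.1 - p.2) == 0]]|.

(* Main.v *)
Require Import Defs.
From HB Require Import structures.
From mathcomp Require Import all_boot all_order all_algebra all_field.
From mathcomp Require Import ring lra.
Set Implicit Arguments. Unset Strict Implicit. Unset Printing Implicit Defensive.
Import Order.TTheory GRing.Theory Num.Theory.
Local Open Scope ring_scope.

Lemma exists_psi (F : finFieldType) : exists psi : F -> algC,
  [/\ forall x y, psi (x + y) = psi x * psi y, psi 0 = 1,
      forall x, psi (- x) = (psi x)^* & exists c, psi c != 1].
Proof.
have [p pr_p chp] := finPcharP F.
pose R := pPrimeCharType chp.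
have [f lin_f [g fK gK]] := pprimeChar_vectAxiom chp.
set n := logn _ _ in f lin_f g fK gK.
have fD : forall x y : R, f (x + y) = f x + f y.
  by move=> x y; rewrite -{1}[x]scale1r lin_f scale1r.
have f0 : f 0 = 0.
  by apply: (addrI (f 0)); rewrite -fD !addr0.
have n_gt0 : (0 < n)%N.
  case: (posnP n) => // n0; exfalso.
  have : f 1 = f 0 by apply/matrixP => i j; have := ltn_ord j; rewrite {2}n0.
  by move/(can_inj fK)/eqP; rewrite oner_eq0.
pose i0 : 'I_n := Ordinal n_gt0.
have [w wp] := C_prim_root_exists (prime_gt0 pr_p).
pose h (x : F) : 'F_p := f x 0 i0.
exists (fun x => w ^+ (h x)).
have psiD : forall x y, w ^+ (h (x + y)) = w ^+ h x * w ^+ h y.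
  move=> x y; rewrite -exprD /h fD mxE /=.
  have wm : forall m, w ^+ (m %% (Zp_trunc (pdiv p)).+2) = w ^+ m.
    by move=> m; rewrite Fp_cast // prim_expr_mod.
  exact: wm.
have psi0 : w ^+ h 0 = 1 by rewrite /h f0 mxE.
have nw : `|w| = 1.
  apply/eqP; rewrite -(pexpr_eq1 (prime_gt0 pr_p)) ?normr_ge0 //.
  by rewrite -normrX (prim_expr_order wp) normr1.
split => //.
- move=> x; have e : w ^+ h (- x) * w ^+ h x = 1 by rewrite -psiD addNr.
  have nx : `|w ^+ h x| = 1 by rewrite normrX nw expr1n.
  rewrite -[RHS]mul1r -e -mulrA -normCK nx expr1n mulr1 //.
- exists (g (const_mx 1)); rewrite /h gK mxE.
  have wm : forall m, w ^+ (m %% (Zp_trunc (pdiv p)).+2) = w ^+ m.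
    by move=> m; rewrite Fp_cast // prim_expr_mod.
  rewrite /= wm.
  rewrite -[X in _ != X](expr0 w) (eq_prim_root_expr wp) mod0n modn_small ?prime_gt1 //.
Qed.

Section Basic.
Variable F : finFieldType.
Hypothesis card3 : (#|F| %% 4 = 3)%N.

Lemma two_nz : (2 : F) != 0.
Proof.
have [p pr_p chp] := finPcharP F.
apply/negP => /eqP h2.
have p2 : p = 2%N.
  have : (p %| 2)%N by rewrite (dvdn_pcharf chp) h2.
  by rewrite dvdn_prime2 // => /eqP.
have := card_pprimeChar chp; rewrite /= => cF.
move: card3; rewrite cF; move: (logn _ _) => m; rewrite p2.
case: m => [|[|m]] //.
by rewrite !expnS mulnA -modnMml.
Qed.

Lemma no_sqrt_m1 (i : F) : i ^+ 2 != -1.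
Proof.
apply/negP => /eqP hi.
have i0 : i != 0 by apply/eqP => i0; move: hi; rewrite i0 expr0n /= => /eqP; rewrite eq_sym oppr_eq0 oner_eq0.
have := expf_card i.
rewrite (divn_eq #|F| 4) card3 exprD mulnC exprM.
have -> : i ^+ 4 = 1 by rewrite (exprM i 2 2) hi sqrrN expr1n.
have -> : i ^+ 3 = i ^+ 2 * i by rewrite -exprSr.
rewrite expr1n mul1r hi mulN1r => /eqP; rewrite eq_sym -subr_eq0 opprK -mulr2n -mulr_natl mulf_eq0 => /orP[]; by rewrite ?(negPf i0) ?(negPf two_nz).

Qed.
End Basic.

Section Main.
Variable F : finFieldType.
Variable psi : F -> algC.
Hypothesis psiD : forall x y, psi (x + y) = psi x * psi y.
Hypothesis psi0 : psi 0 = 1.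
Hypothesis psiN : forall x, psi (- x) = (psi x)^*.
Hypothesis psint : exists c, psi c != 1.
Hypothesis two_nz : (2 : F) != 0.
Hypothesis noi : forall i : F, i ^+ 2 != -1.
Local Notation q := #|F|.

Lemma sum_psi_mul (l : F) : \sum_y psi (l * y) = if l == 0 then q%:R else 0.
Proof.
case: eqP => [->|/eqP l0].
  under eq_bigr do rewrite mul0r psi0.
  by rewrite sumr_const.
have [c hc] := psint.
set S := \sum_y _.
have : S = psi c * S.
  rewrite [LHS](reindex_inj (addIr (c / l))) /= /S mulr_sumr.
  apply: eq_bigr => y _; rewrite mulrDr mulrCA divff // mulr1 psiD mulrC //.
move/eqP; rewrite -subr_eq0 -{1}[S]mul1r -mulrBl mulf_eq0 subr_eq0 eq_sym (negPf hc) /=.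
by move/eqP.
Qed.

Lemma psi_sum (I : Type) (r : seq I) (P : pred I) (f : I -> F) :
  psi (\sum_(i <- r | P i) f i) = \prod_(i <- r | P i) psi (f i).
Proof. by apply: (big_morph psi psiD psi0). Qed.

Lemma count_sum (g : F -> F) (phi : F -> algC) :
  \sum_y phi (g y) = \sum_t #|[set y | g y == t]|%:R * phi t.
Proof.
rewrite (partition_big g predT) //=; apply: eq_bigr => t _.
rewrite (eq_bigr (fun _ => phi t)); last by move=> y /eqP ->.
rewrite sumr_const mulr_natl; congr (_ *+ _).
by apply: eq_card => y; rewrite inE.
Qed.

Lemma count_sum_nat (g : F -> F) : (\sum_t #|[set y | g y == t]| = q)%N.
Proof.
apply/eqP; rewrite -(eqr_nat algC) natr_sum.
have := count_sum g (fun _ => 1).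
under [X in _ = X -> _]eq_bigr do rewrite mulr1.
by move=> <-; rewrite sumr_const.
Qed.

Let c (t : F) := #|[set y : F | y ^+ 2 == t]|.

Lemma c_le2 t : (c t <= 2)%N.
Proof.
case: (pickP [pred y : F | y ^+ 2 == t]) => [y0 /= /eqP hy0|h].
  apply: (@leq_trans #|[set y0; - y0]|); last by rewrite cards2; case: (_ != _).
  apply: subset_leq_card; apply/subsetP => y; rewrite !inE -hy0 eqf_sqr.
  done.
rewrite /c (eq_card (B := pred0)) ?card0 // => y; rewrite inE; exact: h.
Qed.

Lemma c_pair t : (c t + c (- t) = 2)%N.
Proof.
have le2 : forall t, (c t + c (- t) <= 2)%N.
  move=> u; case: (eqVneq u 0) => [->|u0].
    rewrite oppr0 /c (eq_card (B := pred1 0)) ?card1 // => y.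
    by rewrite inE sqrf_eq0.
  case: (posnP (c u)) => [->|]; first by rewrite c_le2.
  case: (posnP (c (- u))) => [->|]; first by rewrite addn0 c_le2.
  rewrite /c !card_gt0 => /set0Pn[y2]; rewrite inE => /eqP h2 /set0Pn[y1].
  rewrite inE => /eqP h1; exfalso.
  have y10 : y1 != 0 by apply: contraNneq u0 => y0; rewrite -h1 y0 expr0n.
  by move: (noi (y2 / y1)); rewrite expr_div_n h2 h1 mulNr divff ?eqxx // expf_neq0.
have tot : (\sum_u (c u + c (- u)) = 2 * q)%N.
  rewrite big_split /= /c count_sum_nat.
  rewrite (reindex_inj (@oppr_inj F)) /=.
  under eq_bigr do rewrite opprK.
  by rewrite count_sum_nat mul2n addnn.
apply/eqP; rewrite eqn_leq le2 /= leqNgt; apply/negP => lt.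
have : (\sum_u (c u + c (- u)) < 2 * q)%N.
  have e2 : (2 * q = \sum_(u : F) 2)%N by rewrite sum_nat_const mulnC.
  rewrite e2 (bigD1 t) //= [X in (_ < X)%N](bigD1 t) //=.
  rewrite -addSn leq_add // leq_sum // => u _; exact: le2.
by rewrite tot ltnn.
Qed.

Definition G (r : F) := \sum_y psi (r * y ^+ 2).

Lemma gauss_add r : r != 0 -> G r + G (- r) = 0.
Proof.
move=> r0.
have e1 : G r = \sum_t (c t)%:R * psi (r * t).
  exact: (count_sum (fun y => y ^+ 2) (fun t => psi (r * t))).
have e2 : G (- r) = \sum_t #|[set y | - y ^+ 2 == t]|%:R * psi (r * t).
  rewrite -(count_sum (fun y => - y ^+ 2) (fun t => psi (r * t))).
  by apply: eq_bigr => y _; rewrite mulNr mulrN.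
rewrite e1 e2.
rewrite -big_split /=.
rewrite (eq_bigr (fun t => 2%:R * psi (r * t))); last first.
  move=> t _; rewrite -mulrDl -natrD; congr (_%:R * _).
  have -> : #|[set y | - y ^+ 2 == t]| = c (- t).
    by apply: eq_card => y; rewrite !inE eqr_oppLR.
  by rewrite c_pair.
by rewrite -mulr_sumr sum_psi_mul (negPf r0) mulr0.
Qed.

Lemma gauss_mul r : r != 0 -> G r * G (- r) = q%:R.
Proof.
move=> r0; rewrite /G mulr_suml.
rewrite (eq_bigr (fun x => \sum_y psi (- r * y ^+ 2) * psi ((- (r * y * 2)) * x))); last first.
  move=> x _; rewrite mulr_sumr (reindex_inj (addIr x)) /=; apply: eq_bigr => y _.
  rewrite -!psiD; congr psi; ring.
rewrite exchange_big /=.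
under eq_bigr do rewrite -mulr_sumr sum_psi_mul.
rewrite (bigD1 0) //= big1 ?addr0.
  by rewrite !(mulr0, mul0r, oppr0, eqxx) expr0n mulr0 psi0 mul1r.
move=> y y0; have : - (r * y * 2) != 0 by rewrite oppr_eq0 !mulf_neq0.
by move/negPf->; rewrite mulr0.
Qed.

Lemma gauss_sq r : r != 0 -> G r ^+ 2 = - q%:R.
Proof.
move=> r0; have := gauss_mul r0.
have -> : G (- r) = - G r by apply/eqP; rewrite -addr_eq0 addrC gauss_add.
by rewrite mulrN expr2 => <-; rewrite opprK.
Qed.

Lemma complete_sq r b : r != 0 ->
  \sum_y psi (r * y ^+ 2 + y * b) = psi (- (b ^+ 2 / (r * 4%:R))) * G r.
Proof.
move=> r0; rewrite /G mulr_sumr (reindex_inj (addIr (- (b / (r * 2%:R))))) /=.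
apply: eq_bigr => y _; rewrite -psiD; congr psi.
have h4 : (4%:R : F) != 0.
  by rewrite (_ : (4%:R : F) = 2 * 2) ?mulf_neq0 // -natrM.
field; rewrite ?r0 ?two_nz ?h4 //.
Qed.

Lemma prod_sum d (phi : 'I_d -> F -> algC) :
  \sum_(s : 'rV[F]_d) \prod_i phi i (s 0 i) = \prod_i \sum_y phi i y.
Proof.
rewrite bigA_distr_bigA /=.
rewrite (reindex (fun f : {ffun 'I_d -> F} => \row_i f i)) /=.
  by apply: eq_bigr => f _; apply: eq_bigr => i _; rewrite mxE.
exists (fun s : 'rV_d => [ffun i => s 0 i]) => [f _|s _].
  by apply/ffunP => i; rewrite ffunE mxE.
by apply/rowP => i; rewrite !mxE ffunE.
Qed.

Definition dot d (s x : 'rV[F]_d) := \sum_i s 0 i * x 0 i.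

Lemma ind (u : F) : (u == 0)%:R * q%:R = \sum_r psi (r * u).
Proof.
under eq_bigr do rewrite mulrC.
by rewrite sum_psi_mul; case: eqP; rewrite ?mul1r ?mul0r.
Qed.

Lemma prod_ind d (x : 'rV[F]_d) :
  \prod_i (if x 0 i == 0 then q%:R else 0 : algC) = q%:R ^+ d * (x == 0)%:R.
Proof.
case: eqP => [->|/eqP x0].
  rewrite mulr1 (eq_bigr (fun _ => q%:R)) ?prodr_const ?card_ord // => i _.
  by rewrite mxE eqxx.
have [i xi] : exists i, x 0 i != 0.
  apply/existsP; apply: contraNT x0; rewrite negb_exists => /forallP h.
  by apply/eqP/rowP => i; rewrite mxE; apply/eqP; have := h i; rewrite negbK.
by rewrite mulr0 (bigD1 i) //= (negPf xi) mul0r.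
Qed.

Lemma sphere_ft d (x : 'rV[F]_d) :
  q%:R * \sum_(s | sqnorm s == 0) psi (dot s x) =
  q%:R ^+ d * (x == 0)%:R +
  \sum_(r | r != 0) G r ^+ d * psi (- (sqnorm x / (r * 4%:R))).
Proof.
rewrite big_mkcond mulr_sumr /=.
rewrite (eq_bigr (fun s => \sum_r psi (r * sqnorm s + dot s x))); last first.
  move=> s _; under eq_bigr do rewrite psiD.
  rewrite -mulr_suml -ind.
  by case: eqP => _; rewrite /= ?mul1r ?mul0r ?mulr0 // mulrC.
rewrite exchange_big /=.
under eq_bigr => r _.
  rewrite (eq_bigr (fun s : 'rV_d => \prod_i psi (r * s 0 i ^+ 2 + s 0 i * x 0 i))); last first.
    move=> s _; rewrite -psi_sum /sqnorm /dot mulr_sumr -big_split //.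
  rewrite (prod_sum (fun i y => psi (r * y ^+ 2 + y * x 0 i))).
  over.
rewrite /= (bigD1 0) //=; congr (_ + _).
  rewrite -prod_ind; apply: eq_bigr => i _.
  under eq_bigr do rewrite mul0r add0r mulrC.
  by rewrite sum_psi_mul.
apply: eq_bigr => r r0.
under eq_bigr do rewrite complete_sq //.
rewrite big_split /= prodr_const card_ord mulrC; congr (_ * _).
rewrite -psi_sum; congr psi.
by rewrite /sqnorm mulr_suml sumrN.
Qed.

Lemma q_neq0 : (q%:R : algC) != 0.
Proof. by rewrite pnatr_eq0 -lt0n; apply/card_gt0P; exists 0. Qed.

Lemma sum_inv_nz (n : F) :
  \sum_(r | r != 0) psi (- (n / (r * 4%:R))) = (n == 0)%:R * q%:R - 1.
Proof.
have h4 : (4%:R : F) != 0.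
  by rewrite (_ : (4%:R : F) = 2 * 2) ?mulf_neq0 // -natrM.
pose h (r : F) := - (r * 4%:R)^-1.
have hh : involutive h.
  move=> r; rewrite /h; case: (eqVneq r 0) => [->|r0].
    by rewrite mul0r invr0 oppr0 mul0r invr0 oppr0.
  by rewrite mulNr invrN opprK invfM invrK mulfK.
have e : \sum_(r | r != 0) psi (- (n / (r * 4%:R))) = \sum_(r | h r != 0) psi (h r * n).
  apply: eq_big => r.
    by rewrite /h oppr_eq0 invr_eq0 mulf_eq0 (negPf h4) orbF.
  by move=> _; rewrite /h mulNr mulrC.
rewrite e -(@reindex_inj _ _ _ _ h (fun u => u != 0) (fun u => psi (u * n)) (inv_inj hh)) /= ind.
by rewrite [in RHS](bigD1 0) //= mul0r psi0 addrAC subrr add0r.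
Qed.

Lemma sphere_val k (x : 'rV[F]_(4 * k + 2)) :
  \sum_(s | sqnorm s == 0) psi (dot s x) =
  q%:R ^+ (4 * k + 1) * (x == 0)%:R
  - q%:R ^+ (2 * k) * ((sqnorm x == 0)%:R * q%:R - 1).
Proof.
apply: (mulfI q_neq0); rewrite sphere_ft.
rewrite (eq_bigr (fun r => - q%:R ^+ (2 * k + 1) * psi (- (sqnorm x / (r * 4%:R))))); last first.
  move=> r r0; congr (_ * _).
  have -> : (4 * k + 2 = 2 * (2 * k + 1))%N by rewrite mulnDr mulnA muln1.
  rewrite exprM gauss_sq // exprNn.
  rewrite (_ : (-1) ^+ (2 * k + 1) = -1 :> algC) ?mulN1r //.
  by rewrite exprD exprM sqrrN !expr1n mul1r expr1.
rewrite -mulr_sumr sum_inv_nz.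
have e1 : (q%:R : algC) ^+ (4 * k + 2) = q%:R * q%:R ^+ (4 * k + 1).
  by rewrite -exprS addnS addn1.
have e2 : (q%:R : algC) ^+ (2 * k + 1) = q%:R * q%:R ^+ (2 * k).
  by rewrite -exprS addn1.
rewrite e1 e2.
move: (_ ^+ (4 * k + 1)) (_ ^+ (2 * k)) => a b; ring.
Qed.

Lemma Niso_sum d (A : {set 'rV[F]_d}) :
  (Niso A)%:R = \sum_(a in A) \sum_(b in A) ((sqnorm (a - b) == 0)%:R : algC).
Proof.
transitivity (\sum_a \sum_b (((a \in A) && (b \in A) && (sqnorm (a - b) == 0)))%:R : algC).
  rewrite pair_bigA /= /Niso -sum1_card natr_sum big_mkcond /=.
  by apply: eq_bigr => -[a b] _; rewrite inE /= andbA; case: ifP.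
rewrite [RHS]big_mkcond; apply: eq_bigr => a _; case: (a \in A) => /=.
  rewrite [RHS]big_mkcond; apply: eq_bigr => b _; by case: (b \in A).
by rewrite big1.
Qed.

Lemma dotB d (s a b : 'rV[F]_d) : dot s (a - b) = dot s a - dot s b.
Proof. by rewrite /dot -sumrB; apply: eq_bigr => i _; rewrite !mxE mulrBr. Qed.

Lemma main_nat k (A : {set 'rV[F]_(4 * k + 2)}) :
  (q ^ (2 * k + 1) * Niso A <= q ^ (4 * k + 1) * #|A| + q ^ (2 * k) * #|A| ^ 2)%N.
Proof.
rewrite -(ler_nat algC) !natrD !natrM !natrX Niso_sum.
pose S (x : 'rV[F]_(4 * k + 2)) := \sum_(s | sqnorm s == 0) psi (dot s x).
have key : forall x : 'rV_(4 * k + 2), (q%:R : algC) ^+ (2 * k + 1) * (sqnorm x == 0)%:R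
   = q%:R ^+ (4 * k + 1) * (x == 0)%:R + q%:R ^+ (2 * k) - S x.
  move=> x; rewrite /S sphere_val addn1 exprS.
  move: (_ ^+ (4 * k + 1)) (_ ^+ (2 * k)) => u v; ring.
rewrite mulr_sumr (eq_bigr (fun a => \sum_(b in A) (q%:R ^+ (4 * k + 1) * (a - b == 0)%:R
   + q%:R ^+ (2 * k) - S (a - b)))); last first.
  by move=> a _; rewrite mulr_sumr; apply: eq_bigr => b _; rewrite key.
under eq_bigr do rewrite sumrB big_split /=.
rewrite sumrB big_split /=.
have h1 : \sum_(a in A) \sum_(b in A) (q%:R : algC) ^+ (4 * k + 1) * (a - b == 0)%:R
   = q%:R ^+ (4 * k + 1) * #|A|%:R.
  rewrite (eq_bigr (fun _ => q%:R ^+ (4 * k + 1))) ?sumr_const ?mulr_natr //.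
  move=> a aA; rewrite (bigD1 a) //= subrr eqxx mulr1 big1 ?addr0 //.
  by move=> b /andP[_ ba]; rewrite subr_eq0 eq_sym (negPf ba) mulr0.
have h2 : \sum_(a in A) \sum_(b in A) (q%:R : algC) ^+ (2 * k)
   = q%:R ^+ (2 * k) * #|A|%:R ^+ 2.
  rewrite (eq_bigr (fun _ => q%:R ^+ (2 * k) *+ #|A|)) ?sumr_const //.
    by rewrite -mulrnA expr2 -natrM mulr_natr.
rewrite h1 h2 gerDl oppr_le0.
have -> : \sum_(a in A) \sum_(b in A) S (a - b) =
  \sum_(s | sqnorm s == 0) (\sum_(a in A) psi (dot s a)) * (\sum_(a in A) psi (dot s a))^*.
  rewrite /S.
  under eq_bigr do rewrite exchange_big /=.
  rewrite exchange_big /=; apply: eq_bigr => s _.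
  rewrite rmorph_sum mulr_suml; apply: eq_bigr => a _.
  rewrite mulr_sumr; apply: eq_bigr => b _.
  by rewrite dotB psiD psiN.
by apply: sumr_ge0 => s _; exact: mul_conjC_ge0.
Qed.
End Main.


Theorem lemma2p2 :
  exists C : rat, forall (F : finFieldType) (k : nat),
    (0 < k)%N -> (#|F| %% 4 = 3)%N ->
    forall A : {set 'rV[F]_(4 * k + 2)},
      (Niso A)%:R <= C * ((#|A| ^ 2)%:R / (#|F|)%:R + (#|F| ^ (2 * k) * #|A|)%:R).
Proof.
exists 1 => F k k0 h3 A; rewrite mul1r.
have [psi [psiD psi0 psiN psint]] := exists_psi F.
have := @main_nat F psi psiD psi0 psiN psint (two_nz h3) (no_sqrt_m1 h3) k A.
set q := #|F|; set N := Niso A; set a := #|A|.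
have q0 : (0 < q)%N by apply/card_gt0P; exists 0.
have e1 : (q ^ (2 * k + 1) * N = q ^ (2 * k) * (q * N))%N.
  by rewrite expnD expn1 -mulnA.
have e2 : (q ^ (4 * k + 1) * a + q ^ (2 * k) * a ^ 2
          = q ^ (2 * k) * (q ^ (2 * k + 1) * a + a ^ 2))%N.
  have -> : (4 * k + 1 = 2 * k + (2 * k + 1))%N by rewrite addnA -mulnDl.
  by rewrite expnD -mulnA -mulnDr.
rewrite e1 e2 leq_pmul2l ?expn_gt0 ?q0 // => hle.
rewrite -(ler_pM2l (_ : 0 < q%:R :> rat)) ?ltr0n //.
rewrite mulrDr mulrCA divff ?pnatr_eq0 -?lt0n // mulr1.
rewrite -!natrM -natrD ler_nat.
by rewrite addnC mulnA -expnS -addn1.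
Qed.
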